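(* Let $R$ be a ring such that $\operatorname{Nil}^*(R)=0$ and $R$ satisfies Köthe's conjecture, and suppose that $xy\in\operatorname{Nil}(R)$ for all $x,y\in\operatorname{Nil}(R)$ with $x^2=0$. Let $r\in\mathbb{N}$ and $x_1,\ldots,x_r\in\operatorname{Nil}(R)$ with $x_1^n=0$ for some $n\in\mathbb{N}$. Then $$x_1^{n_1}x_2x_1^{n_2}x_3\cdots x_1^{n_{r-1}}x_rx_1^{n_r}=0$$ for all positive integers $n_1,\ldots,n_r$ with $n_1+\cdots+n_r\ge n$. In particular, $\operatorname{Nil}(R)$ is multiplicatively closed.
   Context: Rings are associative and not necessarily unital. $\operatorname{Nil}(R)$ is the set of nilpotent elements of $R$; $\operatorname{Nil}^*(R)$ is the upper nilradical, the sum of all nil two-sided ideals of $R$. $R$ satisfies Köthe's conjecture if every nil left ideal of $R$ is contained in a nil two-sided ideal. $\mathbb{N}$ denotes the positive integers. *)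

(* Defs.v *)
(* A (possibly non-unital) associative ring is encoded as an
   additive abelian group V : zmodType together with a multiplication
   [mul : V -> V -> V] assumed associative and bi-additive (distributive). *)
From HB Require Import structures.
From mathcomp Require Import all_boot all_order all_algebra.
Set Implicit Arguments. Unset Strict Implicit. Unset Printing Implicit Defensive.
Import GRing.Theory.
Local Open Scope ring_scope.

Section RngDefs.
Variables (V : zmodType) (mul : V -> V -> V).

Definition rng_axioms : Prop :=
  [/\ forall a b c, mul a (mul b c) = mul (mul a b) c,
      forall a b c, mul (a + b) c = mul a c + mul b c
    & forall a b c, mul a (b + c) = mul a b + mul a c].

(* positive powers: npow x k = x^k for k >= 1 (npow x 0 = 0 is a junk value,
   never used with k = 0 below) *)
Fixpoint npow (x : V) (k : nat) : V :=
  match k with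
  | 0%N => 0
  | 1%N => x
  | k'.+1 => mul (npow x k') x
  end.

Definition nilpotent (x : V) : Prop := exists k : nat, (0 < k)%N /\ npow x k = 0.

Definition nil_set (S : V -> Prop) : Prop := forall x, S x -> nilpotent x.

Definition additive_subgroup (S : V -> Prop) : Prop :=
  [/\ S 0, forall a b, S a -> S b -> S (a + b) & forall a, S a -> S (- a)].

Definition left_ideal (S : V -> Prop) : Prop :=
  additive_subgroup S /\ forall r a, S a -> S (mul r a).

Definition two_sided_ideal (S : V -> Prop) : Prop :=
  [/\ additive_subgroup S, forall r a, S a -> S (mul r a)
    & forall r a, S a -> S (mul a r)].

(* Nil^*(R): the sum of all nil two-sided ideals, i.e. the set of finite sums
   of elements each lying in some nil two-sided ideal. *)
Definition upper_nilradical (x : V) : Prop :=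
  exists s : seq V, x = \sum_(a <- s) a /\
    (forall a, a \in s -> exists I : V -> Prop,
        [/\ two_sided_ideal I, nil_set I & I a]).

Definition koethe : Prop :=
  forall L : V -> Prop, left_ideal L -> nil_set L ->
    exists I : V -> Prop, [/\ two_sided_ideal I, nil_set I & forall a, L a -> I a].

(* word k i = x_1^{n_i} x_{i+1} x_1^{n_{i+1}} x_{i+2} ... x_{i+k} x_1^{n_{i+k}} ;
   the word of the statement is  word (r-1) 1. *)
Fixpoint word (x : nat -> V) (ns : nat -> nat) (k i : nat) : V :=
  match k with
  | 0%N => npow (x 1%N) (ns i)
  | k'.+1 => mul (mul (npow (x 1%N) (ns i)) (x i.+1)) (word x ns k' i.+1)
  end.

End RngDefs.

(* Main.v *)
Require Import Defs.
From mathcomp Require Import all_boot all_order all_algebra.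
From mathcomp Require Import zify.
Set Implicit Arguments. Unset Strict Implicit. Unset Printing Implicit Defensive.
Import GRing.Theory.
Local Open Scope ring_scope.

Fixpoint ssum (ns : nat -> nat) (i k : nat) : nat :=
  match k with 0%N => ns i | k'.+1 => (ns i + ssum ns i.+1 k')%N end.

Lemma ssum_ext k : forall j ns ns', (forall t, (j <= t)%N -> ns t = ns' t) ->
  ssum ns j k = ssum ns' j k.
Proof.
elim: k => [|k IH] j ns ns' H /=; first by rewrite H.
rewrite H // (IH j.+1 ns ns') // => t Ht; apply: H; lia.
Qed.

Lemma ssum_upd k j ns a :
  ssum (fun t => if t == j then (a + ns j)%N else ns t) j k = (a + ssum ns j k)%N.
Proof.
case: k => [|k] /=; rewrite eqxx //.
rewrite (@ssum_ext k j.+1 _ ns) ?addnA // => t Ht; by rewrite gtn_eqF.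
Qed.

Lemma sum_ssum ns k : forall i, (\sum_(i <= j < (i + k).+1) ns j)%N = ssum ns i k.
Proof.
elim: k => [|k IH] i /=; first by rewrite addn0 big_nat1.
rewrite big_ltn; last lia.
by rewrite -addSnnS IH.
Qed.

Section S.
Variables (V : zmodType) (mul : V -> V -> V).
Hypothesis Hax : rng_axioms mul.
Hypothesis Hnil : forall x, upper_nilradical mul x -> x = 0.
Hypothesis Hk : koethe mul.
Hypothesis Hsq : forall x y, nilpotent mul x -> nilpotent mul y -> mul x x = 0 ->
     nilpotent mul (mul x y).

Lemma mulA a b c : mul a (mul b c) = mul (mul a b) c.
Proof. by case: Hax. Qed.
Lemma mulDl a b c : mul (a + b) c = mul a c + mul b c.
Proof. by case: Hax. Qed.
Lemma mulDr a b c : mul a (b + c) = mul a b + mul a c.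
Proof. by case: Hax. Qed.
Lemma mul0r a : mul 0 a = 0.
Proof.
have h := mulDl 0 0 a; rewrite addr0 in h.
by apply: (addrI (mul 0 a)); rewrite addr0 -h.
Qed.
Lemma mulr0 a : mul a 0 = 0.
Proof.
have h := mulDr a 0 0; rewrite addr0 in h.
by apply: (addrI (mul a 0)); rewrite addr0 -h.
Qed.
Lemma mulNr a b : mul (- a) b = - mul a b.
Proof. by apply: (addrI (mul a b)); rewrite -mulDl !subrr mul0r. Qed.
Lemma mulrN a b : mul a (- b) = - mul a b.
Proof. by apply: (addrI (mul a b)); rewrite -mulDr !subrr mulr0. Qed.

Lemma npow_add a i j : (0 < i)%N -> (0 < j)%N ->
  npow mul a (i + j) = mul (npow mul a i) (npow mul a j).
Proof.
move=> i0; elim: j => [|j IH] // _.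
case: j IH => [|j] IH; first by move: i0; rewrite addn1; case: (i).
rewrite addnS.
have -> : npow mul a (i + j.+1).+1 = mul (npow mul a (i + j.+1)) a.
  by rewrite addnS.
by rewrite IH // -mulA.
Qed.

Lemma npow_ge a n m : (0 < n)%N -> npow mul a n = 0 -> (n <= m)%N -> npow mul a m = 0.
Proof.
move=> n0 H /subnKC <-.
case: (m - n)%N => [|d]; first by rewrite addn0.
by rewrite npow_add // H mul0r.
Qed.

Lemma rot_pow a b k :
  npow mul (mul b a) k.+2 = mul (mul b (npow mul (mul a b) k.+1)) a.
Proof.
elim: k => [|k IH]; first by rewrite /= !mulA.
have -> : npow mul (mul b a) k.+3 = mul (npow mul (mul b a) k.+2) (mul b a) by [].
rewrite IH.
have -> : npow mul (mul a b) k.+2 = mul (npow mul (mul a b) k.+1) (mul a b) by [].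
by rewrite !mulA.
Qed.

Lemma nil_rot a b : nilpotent mul (mul a b) -> nilpotent mul (mul b a).
Proof.
case=> [[|k]] [] // _ H; exists k.+2; split => //.
by rewrite rot_pow H mulr0 mul0r.
Qed.

Lemma nil_left_zero (L : V -> Prop) :
  left_ideal mul L -> nil_set mul L -> forall a, L a -> a = 0.
Proof.
move=> HL HN a La; case: (Hk HL HN) => I [HI NI LI]; apply: Hnil.
exists [:: a]; split; first by rewrite big_seq1.
by move=> b; rewrite inE => /eqP ->; exists I; split; auto.
Qed.

Lemma Fz z : (forall s, nilpotent mul (mul s z)) -> z = 0.
Proof.
move=> Hs.
have H1 : forall s, mul s z = 0.
  move=> s; apply: (@nil_left_zero (fun w => exists t, w = mul t z)); last by exists s.
  - split; first split.
    + by exists 0; rewrite mul0r.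
    + by move=> _ _ [t1 ->] [t2 ->]; exists (t1 + t2); rewrite mulDl.
    + by move=> _ [t ->]; exists (- t); rewrite mulNr.
    + by move=> r _ [t ->]; exists (mul r t); rewrite mulA.
  - by move=> _ [t ->].
apply: (@nil_left_zero (fun w => forall r, mul r w = 0)); last exact H1.
- split; first split.
  + by move=> r; rewrite mulr0.
  + by move=> a b Ha Hb r; rewrite mulDr Ha Hb addr0.
  + by move=> a Ha r; rewrite mulrN Ha oppr0.
  + by move=> r a Ha r'; rewrite mulA Ha.
- by move=> w Hw; exists 2%N; split => //=.
Qed.

Lemma word_ext (x : nat -> V) k : forall j ns ns', (forall t, (j <= t)%N -> ns t = ns' t) ->
  word mul x ns k j = word mul x ns' k j.
Proof.
elim: k => [|k IH] j ns ns' H /=; first by rewrite H.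
rewrite H // (IH j.+1 ns ns') // => t Ht; apply: H; lia.
Qed.

Lemma merge (x : nat -> V) k j ns a : (0 < a)%N -> (0 < ns j)%N ->
  mul (npow mul (x 1%N) a) (word mul x ns k j)
  = word mul x (fun t => if t == j then (a + ns j)%N else ns t) k j.
Proof.
move=> a0 n0; case: k => [|k] /=; rewrite eqxx npow_add //.
rewrite (@word_ext x k j.+1 _ ns); last by move=> t Ht; rewrite gtn_eqF.
by rewrite !mulA.
Qed.

Lemma WL (x : nat -> V) (n : nat) : (0 < n)%N -> npow mul (x 1%N) n = 0 ->
  forall k i ns, (forall j, (i <= j <= i + k)%N -> (0 < ns j)%N) ->
  (forall j, (i < j <= i + k)%N -> nilpotent mul (x j)) ->
  (n <= ssum ns i k)%N -> word mul x ns k i = 0.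
Proof.
move=> n0 Hxn; elim=> [|k IH] i ns Hpos Hnilx Hsum.
  by apply: (npow_ge n0 Hxn).
apply: Fz => s.
set X := npow mul (x 1%N) (ns i).
set y := x i.+1.
set B := word mul x ns k i.+1.
have -> : word mul x ns k.+1 i = mul (mul X y) B by [].
have HXB : mul X B = 0.
  rewrite /X /B merge; last 2 first.
  - apply: Hpos; lia.
  - apply: Hpos; lia.
  apply: IH.
  - move=> j Hj; case: eqP => _.
      have : (0 < ns i)%N by apply: Hpos; lia.
      lia.
    apply: Hpos; lia.
  - move=> j Hj; apply: Hnilx; lia.
  - rewrite ssum_upd; exact: Hsum.
set h := mul (mul B s) X.
have hh : mul h h = 0.
  rewrite /h -!mulA (mulA X B) HXB mul0r.
  by rewrite mulr0 mulr0.
have nh : nilpotent mul h by exists 2%N.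
have ny : nilpotent mul y by apply: Hnilx; lia.
have := nil_rot (Hsq nh ny hh).
have -> : mul y h = mul (mul y B) (mul s X) by rewrite /h !mulA.
move/nil_rot.
by rewrite !mulA.
Qed.

Lemma main_sec :
  (forall (r : nat) (x : nat -> V) (n : nat),
     (0 < r)%N ->
     (forall i, (1 <= i <= r)%N -> nilpotent mul (x i)) ->
     (0 < n)%N -> npow mul (x 1%N) n = 0 ->
     forall ns : nat -> nat,
       (forall i, (1 <= i <= r)%N -> (0 < ns i)%N) ->
       (n <= \sum_(1 <= i < r.+1) ns i)%N ->
       word mul x ns r.-1 1 = 0)
  /\ (forall a b, nilpotent mul a -> nilpotent mul b -> nilpotent mul (mul a b)).
Proof.
have part1 : forall (r : nat) (x : nat -> V) (n : nat),
     (0 < r)%N ->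
     (forall i, (1 <= i <= r)%N -> nilpotent mul (x i)) ->
     (0 < n)%N -> npow mul (x 1%N) n = 0 ->
     forall ns : nat -> nat,
       (forall i, (1 <= i <= r)%N -> (0 < ns i)%N) ->
       (n <= \sum_(1 <= i < r.+1) ns i)%N ->
       word mul x ns r.-1 1 = 0.
  move=> [|r] // x n _ Hx n0 Hn ns Hpos Hs /=.
  apply: (WL n0 Hn).
  - move=> j Hj; apply: Hpos; lia.
  - move=> j Hj; apply: Hx; lia.
  - by rewrite -sum_ssum add1n.
split => // a b Ha Hb.
have Ha' := Ha; case: Ha' => n [n0 Han].
set x := fun t : nat => if t == 1%N then a else b.
have W0 : word mul x (fun _ => 1%N) n.-1 1 = 0.
  apply: (part1 n x n n0) => //.
  - by move=> i _; rewrite /x; case: eqP.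
  - by rewrite sum_nat_const_nat subSS subn0 muln1.
pose wa := fix wa k := match k with 0%N => a | k'.+1 => mul (mul a b) (wa k') end.
have Ew : forall k j, (0 < j)%N -> word mul x (fun _ => 1%N) k j = wa k.
  elim=> [|k IH] j j0 /=; first by [].
  rewrite IH //; rewrite /x; have -> : (j.+1 == 1%N) = false by case: j j0.
  by [].
have Pc : forall (c : V) k, npow mul c k.+2 = mul c (npow mul c k.+1).
  move=> c; elim=> [|k IH] //.
  have -> : npow mul c k.+3 = mul (npow mul c k.+2) c by [].
  by rewrite {1}IH -mulA.
have Pw : forall k, npow mul (mul a b) k.+1 = mul (wa k) b.
  elim=> [|k IH] //.
  by rewrite Pc IH mulA.
exists n; split => //.
rewrite -(prednK n0) Pw -(Ew _ 1%N) // W0 mul0r //.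
Qed.

End S.

Theorem lemma2p4 (V : zmodType) (mul : V -> V -> V) :
  rng_axioms mul ->
  (forall x, upper_nilradical mul x -> x = 0) ->
  koethe mul ->
  (forall x y, nilpotent mul x -> nilpotent mul y -> mul x x = 0 ->
     nilpotent mul (mul x y)) ->
  (forall (r : nat) (x : nat -> V) (n : nat),
     (0 < r)%N ->
     (forall i, (1 <= i <= r)%N -> nilpotent mul (x i)) ->
     (0 < n)%N -> npow mul (x 1%N) n = 0 ->
     forall ns : nat -> nat,
       (forall i, (1 <= i <= r)%N -> (0 < ns i)%N) ->
       (n <= \sum_(1 <= i < r.+1) ns i)%N ->
       word mul x ns r.-1 1 = 0)
  /\ (forall a b, nilpotent mul a -> nilpotent mul b -> nilpotent mul (mul a b)).
Proof.
move=> H1 H2 H3 H4; exact: (main_sec H1 H2 H3 H4).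
Qed.
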